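(* Let $G$ be a Polish group, $X$ a Polish space with a continuous $G$-action, $F\subseteq E^X_G$ a Borel equivalence relation on $X$, and $C\subseteq X$ a set such that for every $x\in C$ there is an open neighbourhood $V\subseteq G$ of $1_G$ with $V\cdot x\cap C\subseteq[x]_F$, and such that $G(x,C)$ is comeager in $G$ for every $x\in X$. Then for all $x,y\in C$: $$(x,y)\in E^X_G\iff\{(a,b)\in G\times G:(a\cdot x,b\cdot y)\in F\}\text{ is non-meager in }G\times G.$$
   Context: $E^X_G=\{(x,y):\exists g\in G\ g\cdot x=y\}$; $[x]_F$ is the $F$-class of $x$; $G(x,A)=\{g\in G:g\cdot x\in A\}$. *)

(* Defs.v *)
From Stdlib Require Import Reals.
Open Scope R_scope.
Set Implicit Arguments.

Definition is_topology {X : Type} (opn : (X -> Prop) -> Prop) : Prop :=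
  opn (fun _ => True) /\
  (forall (I : Type) (U : I -> X -> Prop), (forall i, opn (U i)) ->
      opn (fun x => exists i, U i x)) /\
  (forall U V, opn U -> opn V -> opn (fun x => U x /\ V x)).

Definition prod_top {A B : Type} (oA : (A -> Prop) -> Prop) (oB : (B -> Prop) -> Prop)
  (W : A * B -> Prop) : Prop :=
  forall p, W p -> exists U V, oA U /\ oB V /\ U (fst p) /\ V (snd p) /\
     (forall a b, U a -> V b -> W (a, b)).

Definition continuous {A B : Type} (oA : (A -> Prop) -> Prop) (oB : (B -> Prop) -> Prop)
  (f : A -> B) : Prop :=
  forall V, oB V -> oA (fun x => V (f x)).

Definition is_metric {X : Type} (d : X -> X -> R) : Prop :=
  (forall x y, 0 <= d x y) /\ (forall x y, d x y = 0 <-> x = y) /\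
  (forall x y, d x y = d y x) /\ (forall x y z, d x z <= d x y + d y z).

Definition metric_open {X : Type} (d : X -> X -> R) (U : X -> Prop) : Prop :=
  forall x, U x -> exists eps, 0 < eps /\ forall y, d x y < eps -> U y.

Definition cauchy {X : Type} (d : X -> X -> R) (s : nat -> X) : Prop :=
  forall eps, 0 < eps -> exists N, forall m n, (N <= m)%nat -> (N <= n)%nat -> d (s m) (s n) < eps.

Definition converges {X : Type} (d : X -> X -> R) (s : nat -> X) (l : X) : Prop :=
  forall eps, 0 < eps -> exists N, forall n, (N <= n)%nat -> d (s n) l < eps.

Definition complete_metric {X : Type} (d : X -> X -> R) : Prop :=
  forall s, cauchy d s -> exists l, converges d s l.

Definition countable_set {X : Type} (D : X -> Prop) : Prop :=
  exists f : nat -> X, forall x, D x -> exists n, f n = x.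

Definition dense {X : Type} (opn : (X -> Prop) -> Prop) (D : X -> Prop) : Prop :=
  forall U, opn U -> (exists x, U x) -> exists x, U x /\ D x.

Definition separable {X : Type} (opn : (X -> Prop) -> Prop) : Prop :=
  exists D, countable_set D /\ dense opn D.

Definition is_polish {X : Type} (opn : (X -> Prop) -> Prop) : Prop :=
  separable opn /\
  exists d : X -> X -> R, is_metric d /\ complete_metric d /\
     (forall U, opn U <-> metric_open d U).

Definition is_group {G : Type} (mul : G -> G -> G) (inv : G -> G) (e : G) : Prop :=
  (forall a b c, mul a (mul b c) = mul (mul a b) c) /\
  (forall a, mul e a = a /\ mul a e = a) /\
  (forall a, mul (inv a) a = e /\ mul a (inv a) = e).

Definition polish_group {G : Type} (opn : (G -> Prop) -> Prop)
  (mul : G -> G -> G) (inv : G -> G) (e : G) : Prop :=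
  is_group mul inv e /\ is_polish opn /\
  continuous (prod_top opn opn) opn (fun p => mul (fst p) (snd p)) /\
  continuous opn opn inv.

Definition continuous_action {G X : Type} (oG : (G -> Prop) -> Prop) (oX : (X -> Prop) -> Prop)
  (mul : G -> G -> G) (e : G) (act : G -> X -> X) : Prop :=
  (forall x, act e x = x) /\
  (forall g h x, act (mul g h) x = act g (act h x)) /\
  continuous (prod_top oG oX) oX (fun p => act (fst p) (snd p)).

Definition orbit_rel {G X : Type} (act : G -> X -> X) (x y : X) : Prop :=
  exists g, act g x = y.

Definition sigma_algebra {X : Type} (M : (X -> Prop) -> Prop) : Prop :=
  M (fun _ => False) /\
  (forall S, M S -> M (fun x => ~ S x)) /\
  (forall S : nat -> X -> Prop, (forall n, M (S n)) -> M (fun x => exists n, S n x)).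

Definition borel {X : Type} (opn : (X -> Prop) -> Prop) (S : X -> Prop) : Prop :=
  forall M, sigma_algebra M -> (forall U, opn U -> M U) -> M S.

Definition equiv_rel {X : Type} (F : X -> X -> Prop) : Prop :=
  (forall x, F x x) /\ (forall x y, F x y -> F y x) /\
  (forall x y z, F x y -> F y z -> F x z).

Definition closure {X : Type} (opn : (X -> Prop) -> Prop) (S : X -> Prop) (x : X) : Prop :=
  forall U, opn U -> U x -> exists y, U y /\ S y.

Definition nowhere_dense {X : Type} (opn : (X -> Prop) -> Prop) (S : X -> Prop) : Prop :=
  forall U, opn U -> (forall x, U x -> closure opn S x) -> forall x, ~ U x.

Definition meager {X : Type} (opn : (X -> Prop) -> Prop) (S : X -> Prop) : Prop :=
  exists N : nat -> X -> Prop, (forall n, nowhere_dense opn (N n)) /\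
    (forall x, S x -> exists n, N n x).

Definition comeager {X : Type} (opn : (X -> Prop) -> Prop) (S : X -> Prop) : Prop :=
  meager opn (fun x => ~ S x).

(* Main.v *)
Require Import Defs.
From Stdlib Require Import Reals Lra Lia Classical ClassicalEpsilon.
Open Scope R_scope.

Section BCT.
Variables (G : Type) (oG : (G -> Prop) -> Prop) (d : G -> G -> R).
Hypothesis hd : is_metric d.
Hypothesis ho : forall U, oG U <-> metric_open d U.

Definition rect (a b : G) (r : R) (p : G * G) : Prop := d a (fst p) < r /\ d b (snd p) < r.

Lemma d0 a : d a a = 0.
Proof. destruct hd as [_ [H _]]. apply H; reflexivity. Qed.
Lemma dpos a b : 0 <= d a b.
Proof. destruct hd as [H _]. apply H. Qed.
Lemma dsym a b : d a b = d b a.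
Proof. destruct hd as [_ [_ [H _]]]. apply H. Qed.
Lemma dtri a b c : d a c <= d a b + d b c.
Proof. destruct hd as [_ [_ [_ H]]]. apply H. Qed.

Lemma ball_open a r : oG (fun z => d a z < r).
Proof.
  apply ho. intros z Hz. exists (r - d a z). split; [lra|].
  intros y Hy. pose proof (dtri a z y). lra.
Qed.

Lemma full_open : oG (fun _ => True).
Proof. apply ho. intros z _. exists 1. split; [lra| auto]. Qed.

Lemma rect_open a b r : prod_top oG oG (rect a b r).
Proof.
  intros p [H1 H2]. exists (fun z => d a z < r), (fun z => d b z < r).
  repeat split; try apply ball_open; auto.
Qed.

Lemma step a b r (Q : G * G -> Prop) : 0 < r -> nowhere_dense (prod_top oG oG) Q ->
  exists a' b' r', 0 < r' /\ r' <= r / 2 /\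
    (forall p, rect a' b' (2 * r') p -> rect a b r p /\ ~ Q p).
Proof.
  intros hr hQ.
  assert (Hex : exists p, rect a b r p /\ ~ closure (prod_top oG oG) Q p).
  { apply NNPP. intro Hn.
    apply (hQ (rect a b r) (rect_open a b r)) with (x := (a, b)).
    - intros x Hx. apply NNPP. intro Hc. apply Hn. exists x. auto.
    - unfold rect; simpl; rewrite !d0; lra. }
  destruct Hex as [p [Hp Hc]].
  unfold closure in Hc.
  apply not_all_ex_not in Hc. destruct Hc as [U HU].
  apply imply_to_and in HU. destruct HU as [oU HU].
  apply imply_to_and in HU. destruct HU as [Up HU].
  destruct (oU p Up) as [U1 [U2 [o1 [o2 [h1 [h2 hr12]]]]]].
  apply ho in o1. apply ho in o2.
  destruct (o1 _ h1) as [e1 [he1 He1]].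
  destruct (o2 _ h2) as [e2 [he2 He2]].
  destruct Hp as [Hp1 Hp2].
  set (r' := Rmin (Rmin e1 e2) (Rmin (r - d a (fst p)) (r - d b (snd p))) / 2).
  assert (Hm1 := Rmin_l (Rmin e1 e2) (Rmin (r - d a (fst p)) (r - d b (snd p)))).
  assert (Hm2 := Rmin_r (Rmin e1 e2) (Rmin (r - d a (fst p)) (r - d b (snd p)))).
  assert (Hm3 := Rmin_l e1 e2). assert (Hm4 := Rmin_r e1 e2).
  assert (Hm5 := Rmin_l (r - d a (fst p)) (r - d b (snd p))).
  assert (Hm6 := Rmin_r (r - d a (fst p)) (r - d b (snd p))).
  assert (Hpos : 0 < Rmin (Rmin e1 e2) (Rmin (r - d a (fst p)) (r - d b (snd p)))).
  { apply Rmin_pos; apply Rmin_pos; lra. }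
  exists (fst p), (snd p), r'. unfold r'.
  pose proof (dpos a (fst p)).
  split; [lra|]. split; [lra|].
  intros q [Hq1 Hq2]. split.
  - split.
    + pose proof (dtri a (fst p) (fst q)). lra.
    + pose proof (dtri b (snd p) (snd q)). lra.
  - intro HQ. apply HU. exists q. split; [|exact HQ]. destruct q as [q1 q2]. apply hr12.
    + apply He1. simpl in Hq1. lra.
    + apply He2. simpl in Hq2. lra.
Qed.

Lemma rect_mono a b r r' p : r <= r' -> rect a b r p -> rect a b r' p.
Proof. unfold rect. lra. Qed.

Lemma step3 a b r (Q1 Q2 Q3 : G * G -> Prop) : 0 < r ->
  nowhere_dense (prod_top oG oG) Q1 -> nowhere_dense (prod_top oG oG) Q2 ->
  nowhere_dense (prod_top oG oG) Q3 ->
  exists a' b' r', 0 < r' /\ r' <= r / 2 /\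
    (forall p, rect a' b' (2 * r') p -> rect a b r p /\ ~ Q1 p /\ ~ Q2 p /\ ~ Q3 p).
Proof.
  intros hr h1 h2 h3.
  destruct (step a b r Q1 hr h1) as [a1 [b1 [r1 [p1 [l1 H1]]]]].
  destruct (step a1 b1 r1 Q2 p1 h2) as [a2 [b2 [r2 [p2 [l2 H2]]]]].
  destruct (step a2 b2 r2 Q3 p2 h3) as [a3 [b3 [r3 [p3 [l3 H3]]]]].
  exists a3, b3, r3. split; [lra|]. split; [lra|].
  intros p Hp. destruct (H3 p Hp) as [R2 N3].
  destruct (H2 p (rect_mono a2 b2 r2 (2 * r2) p ltac:(lra) R2)) as [R1 N2].
  destruct (H1 p (rect_mono a1 b1 r1 (2 * r1) p ltac:(lra) R1)) as [R0 N1].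
  auto.
Qed.

Hypothesis hc : complete_metric d.

Lemma le_eps x y : (forall eps, 0 < eps -> x < y + eps) -> x <= y.
Proof. intros H. apply Rnot_lt_le. intro Hl. specialize (H (x - y) ltac:(lra)). lra. Qed.

Lemma bct (Q1 Q2 Q3 : nat -> G * G -> Prop) a0 b0 r0 :
  0 < r0 ->
  (forall n, nowhere_dense (prod_top oG oG) (Q1 n)) ->
  (forall n, nowhere_dense (prod_top oG oG) (Q2 n)) ->
  (forall n, nowhere_dense (prod_top oG oG) (Q3 n)) ->
  exists p, rect a0 b0 r0 p /\ forall n, ~ Q1 n p /\ ~ Q2 n p /\ ~ Q3 n p.
Proof.
  intros hr0 h1 h2 h3.
  set (P := fun n (s s' : G * G * R) =>
        0 < snd s -> 0 < snd s' /\ snd s' <= snd s / 2 /\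
        (forall p, rect (fst (fst s')) (snd (fst s')) (2 * snd s') p ->
           rect (fst (fst s)) (snd (fst s)) (snd s) p /\
           ~ Q1 n p /\ ~ Q2 n p /\ ~ Q3 n p)).
  assert (Hex : forall n s, exists s', P n s s').
  { intros n [[a b] r]. destruct (classic (0 < r)) as [Hr|Hr].
    - destruct (step3 a b r (Q1 n) (Q2 n) (Q3 n) Hr (h1 n) (h2 n) (h3 n))
        as [a' [b' [r' H]]].
      exists (a', b', r'). intros _. exact H.
    - exists (a, b, r). intros H. simpl in H. contradiction. }
  set (next := fun n s => proj1_sig (constructive_indefinite_description _ (Hex n s))).
  assert (Hnext : forall n s, P n s (next n s)).
  { intros n s. unfold next. apply proj2_sig. }
  set (sq := fix sq n := match n with O => (a0, b0, r0) | S k => next k (sq k) end).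
  set (ca := fun n => fst (fst (sq n))).
  set (cb := fun n => snd (fst (sq n))).
  set (rr := fun n => snd (sq n)).
  assert (Hpos : forall n, 0 < rr n).
  { induction n; [exact hr0|]. apply (Hnext n (sq n) IHn). }
  assert (HS : forall n, rr (S n) <= rr n / 2 /\
      (forall p, rect (ca (S n)) (cb (S n)) (2 * rr (S n)) p ->
        rect (ca n) (cb n) (rr n) p /\ ~ Q1 n p /\ ~ Q2 n p /\ ~ Q3 n p)).
  { intros n. destruct (Hnext n (sq n) (Hpos n)) as [_ H]. exact H. }
  assert (Hnest : forall k j p, rect (ca (j + k)%nat) (cb (j + k)%nat) (rr (j + k)%nat) p ->
                   rect (ca k) (cb k) (rr k) p).
  { intros k j. induction j; intros p Hp; [exact Hp|].
    apply IHj. destruct (HS (j + k)%nat) as [_ H]. apply H.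
    apply (rect_mono (ca (S (j + k))) (cb (S (j + k))) (rr (S (j + k))) (2 * rr (S (j + k))) p); [pose proof (Hpos (S (j + k))); lra| exact Hp]. }
  assert (Hself : forall n, rect (ca n) (cb n) (rr n) (ca n, cb n)).
  { intros n. unfold rect; simpl. rewrite !d0. pose proof (Hpos n). lra. }
  assert (Hin : forall k m, (k <= m)%nat -> rect (ca k) (cb k) (rr k) (ca m, cb m)).
  { intros k m Hkm. replace m with ((m - k) + k)%nat by lia. apply (Hnest k (m - k)%nat). apply Hself. }
  assert (Hrr : forall n, rr n <= r0 * (/2) ^ n).
  { induction n; simpl. unfold rr; simpl; lra.
    destruct (HS n) as [H _]. lra. }
  assert (Hsmall : forall eps, 0 < eps -> exists N, 2 * rr N < eps).
  { intros eps he.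
    assert (Ha : Rabs (/2) < 1) by (rewrite Rabs_pos_eq; lra).
    destruct (pow_lt_1_zero (/2) Ha (eps / (2 * r0))) as [N HN].
    { apply Rdiv_lt_0_compat; lra. }
    exists N. specialize (HN N (le_n N)).
    rewrite Rabs_pos_eq in HN by (apply pow_le; lra).
    pose proof (Hrr N).
    assert (r0 * (/2) ^ N < r0 * (eps / (2 * r0))) by (apply Rmult_lt_compat_l; lra).
    replace (r0 * (eps / (2 * r0))) with (eps / 2) in H0 by (field; lra). lra. }
  assert (Hca : cauchy d ca).
  { intros eps he. destruct (Hsmall eps he) as [N HN]. exists N.
    intros m n Hm Hn. destruct (Hin N m Hm) as [A1 _]. destruct (Hin N n Hn) as [A2 _].
    simpl in A1, A2. pose proof (dtri (ca m) (ca N) (ca n)). rewrite (dsym (ca m) (ca N)) in H. lra. }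
  assert (Hcb : cauchy d cb).
  { intros eps he. destruct (Hsmall eps he) as [N HN]. exists N.
    intros m n Hm Hn. destruct (Hin N m Hm) as [_ A1]. destruct (Hin N n Hn) as [_ A2].
    simpl in A1, A2. pose proof (dtri (cb m) (cb N) (cb n)). rewrite (dsym (cb m) (cb N)) in H. lra. }
  destruct (hc ca Hca) as [l1 Hl1]. destruct (hc cb Hcb) as [l2 Hl2].
  assert (Hlim : forall k, rect (ca k) (cb k) (2 * rr k) (l1, l2)).
  { intros k. pose proof (Hpos k). split; simpl.
    - cut (d (ca k) l1 <= rr k); [lra|]. apply le_eps. intros eps he.
      destruct (Hl1 eps he) as [M HM]. specialize (HM (M + k)%nat ltac:(lia)).
      destruct (Hin k (M + k)%nat ltac:(lia)) as [A _]. simpl in A.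
      pose proof (dtri (ca k) (ca (M + k)%nat) l1). lra.
    - cut (d (cb k) l2 <= rr k); [lra|]. apply le_eps. intros eps he.
      destruct (Hl2 eps he) as [M HM]. specialize (HM (M + k)%nat ltac:(lia)).
      destruct (Hin k (M + k)%nat ltac:(lia)) as [_ A]. simpl in A.
      pose proof (dtri (cb k) (cb (M + k)%nat) l2). lra. }
  exists (l1, l2). split.
  - destruct (HS 0%nat) as [_ H]. apply (H _ (Hlim 1%nat)).
  - intros n. destruct (HS n) as [_ H]. apply (H _ (Hlim (S n))).
Qed.

Lemma nd_fst (P : G -> Prop) : nowhere_dense oG P ->
  nowhere_dense (prod_top oG oG) (fun p => P (fst p)).
Proof.
  intros hP U hU hcl x Ux.
  destruct (hU x Ux) as [U1 [U2 [o1 [o2 [h1 [h2 hr]]]]]].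
  apply (hP U1 o1) with (x := fst x); [|exact h1].
  intros z hz W oW Wz.
  destruct (hcl (z, snd x) (hr z (snd x) hz h2) (fun q => W (fst q))) as [y [Wy Py]].
  - intros q Wq. exists W, (fun _ => True). repeat split; auto using full_open.
  - exact Wz.
  - exists (fst y). auto.
Qed.

Lemma nd_snd (P : G -> Prop) : nowhere_dense oG P ->
  nowhere_dense (prod_top oG oG) (fun p => P (snd p)).
Proof.
  intros hP U hU hcl x Ux.
  destruct (hU x Ux) as [U1 [U2 [o1 [o2 [h1 [h2 hr]]]]]].
  apply (hP U2 o2) with (x := snd x); [|exact h2].
  intros z hz W oW Wz.
  destruct (hcl (fst x, z) (hr (fst x) z h1 hz) (fun q => W (snd q))) as [y [Wy Py]].
  - intros q Wq. exists (fun _ => True), W. repeat split; auto using full_open.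
  - exact Wz.
  - exists (snd y). auto.
Qed.

End BCT.

Theorem mainTheorem10
  (G : Type) (oG : (G -> Prop) -> Prop) (mul : G -> G -> G) (inv : G -> G) (e : G)
  (hG : polish_group oG mul inv e)
  (X : Type) (oX : (X -> Prop) -> Prop) (hX : is_polish oX)
  (act : G -> X -> X) (hact : continuous_action oG oX mul e act)
  (F : X -> X -> Prop)
  (hFborel : borel (prod_top oX oX) (fun p => F (fst p) (snd p)))
  (hFeq : equiv_rel F)
  (hFE : forall x y, F x y -> orbit_rel act x y)
  (C : X -> Prop)
  (hCloc : forall x, C x -> exists V : G -> Prop, oG V /\ V e /\
             (forall g, V g -> C (act g x) -> F x (act g x)))
  (hCcom : forall x, comeager oG (fun g => C (act g x))) :
  forall x y, C x -> C y ->
    (orbit_rel act x y <->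
     ~ meager (prod_top oG oG) (fun p => F (act (fst p) x) (act (snd p) y))).
Proof.
  intros x y Cx Cy.
  destruct hG as [[gA [gE gI]] [[_ [d [hd [hc ho]]]] [hmul _]]].
  destruct hact as [ae [amul _]].
  destruct hFeq as [_ [Fsym Ftr]].
  split.
  - intros [g Hg] [N [hN hcov]].
    destruct (hCloc x Cx) as [V [oV [Ve HV]]].
    pose proof (hmul V oV (inv g, g)) as Hm. simpl in Hm.
    destruct (gI g) as [Hig _]. rewrite Hig in Hm.
    destruct (Hm Ve) as [U1 [U2 [o1 [o2 [h1 [h2 hr]]]]]]. simpl in h1, h2.
    pose proof (proj1 (ho V) oV e Ve) as [r1 [hr1 Hr1]].
    pose proof (proj1 (ho U1) o1 (inv g) h1) as [r2 [hr2 Hr2]].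
    destruct (hCcom x) as [P [hP cP]].
    destruct (hCcom y) as [Rr [hR cR]].
    destruct (bct G oG d hd ho hc N (fun n p => P n (fst p)) (fun n p => Rr n (snd p))
                e (inv g) (Rmin r1 r2)) as [[p1 p2] [[Hp1 Hp2] Hn]].
    + apply Rmin_pos; auto.
    + exact hN.
    + intro n. apply (nd_fst G oG d ho); auto.
    + intro n. apply (nd_snd G oG d ho); auto.
    + simpl in Hp1, Hp2.
      assert (Vp1 : V p1) by (apply Hr1; pose proof (Rmin_l r1 r2); lra).
      assert (Up2 : U1 p2) by (apply Hr2; pose proof (Rmin_r r1 r2); lra).
      assert (C1 : C (act p1 x)).
      { apply NNPP. intro Hc. destruct (cP p1 Hc) as [n Hn1]. apply (proj1 (proj2 (Hn n))). exact Hn1. }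
      assert (C2 : C (act p2 y)).
      { apply NNPP. intro Hc. destruct (cR p2 Hc) as [n Hn1]. apply (proj2 (proj2 (Hn n))). exact Hn1. }
      assert (F1 : F x (act p1 x)) by (apply HV; auto).
      assert (E2 : act p2 y = act (mul p2 g) x) by (rewrite amul, Hg; reflexivity).
      assert (F2 : F x (act p2 y)).
      { rewrite E2. apply HV.
        - apply (hr p2 g Up2 h2).
        - rewrite <- E2. exact C2. }
      destruct (hcov (p1, p2)) as [n Hn2].
      * simpl. apply Ftr with x; auto.
      * apply (proj1 (Hn n)). exact Hn2.
  - intros Hnm. apply NNPP. intro Ho. apply Hnm.
    exists (fun _ _ => False). split.
    + intros n U oU hcl z Uz. destruct (hcl z Uz U oU Uz) as [w [_ []]].
    + intros [a b] Hab. exfalso. apply Ho. simpl in Hab.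
      destruct (hFE _ _ Hab) as [h Hh].
      exists (mul (inv b) (mul h a)).
      rewrite !amul, Hh, <- amul. destruct (gI b) as [H _]. rewrite H, ae. reflexivity.
Qed.
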